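(* For $\zeta\in\mathbb D$ define $$z(\zeta)=h_E(\zeta)+ih_N(\zeta)-h_W(\zeta)-ih_S(\zeta),\qquad \vartheta(\zeta)=\tfrac{\sqrt2}{2}\big(h_E(\zeta)-h_N(\zeta)+h_W(\zeta)-h_S(\zeta)\big).$$ Then: (i) $z$ and $\vartheta$ are harmonic on $\mathbb D$; (ii) for all $\zeta\in\mathbb D$, $$\partial_\zeta z(\zeta)\cdot\partial_\zeta\overline{z}(\zeta)=\big(\partial_\zeta\vartheta(\zeta)\big)^2,$$ i.e. $\zeta$ is a conformal parametrization of the surface $\mathrm S_\diamondsuit=\{(z(\zeta),\vartheta(\zeta)):\zeta\in\mathbb D\}\subset\mathbb C\times\mathbb R$ with respect to the Lorentz quadratic form $|dz|^2-d\vartheta^2$ of $\mathbb R^{2+1}$; (iii) $(z(\zeta),\vartheta(\zeta))\to(1,\tfrac{\sqrt2}2)$, $(i,-\tfrac{\sqrt2}2)$, $(-1,\tfrac{\sqrt2}2)$, $(-i,-\tfrac{\sqrt2}2)$ as $\zeta$ tends to a point of the open arc $\gamma_E,\gamma_N,\gamma_W,\gamma_S$ respectively, and the set of all limit points of $(z(\zeta),\vartheta(\zeta))$ as $\zeta\to\partial\mathbb D$ is the closed (non-planar) quadrilateral $\mathrm C_\diamondsuit$ with consecutive vertices $(1,\tfrac{\sqrt2}2),(i,-\tfrac{\sqrt2}2),(-1,\tfrac{\sqrt2}2),(-i,-\tfrac{\sqrt2}2)$. Consequently, $\mathrm S_\diamondsuit$ is a minimal surface in the Minkowski space $\mathbb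 R^{2+1}$ spanning $\mathrm C_\diamondsuit$, with conformal parametrization $\zeta$.
   Context: $\mathbb D$ is the open unit disc. $\gamma_E=(e^{-i\pi/4},e^{i\pi/4})$, $\gamma_N=(e^{i\pi/4},e^{3i\pi/4})$, $\gamma_W=(e^{3i\pi/4},e^{5i\pi/4})$, $\gamma_S=(e^{5i\pi/4},e^{7i\pi/4})$ are the four counterclockwise boundary arcs, and $h_E,h_N,h_W,h_S$ denote their harmonic measures in $\mathbb D$: for $\alpha<\beta<\alpha+2\pi$, $\mathrm{hm}_{\mathbb D}(\zeta;(e^{i\alpha},e^{i\beta}))=\tfrac1\pi\big(\arg(e^{i\beta}-\zeta)-\arg(e^{i\alpha}-\zeta)\big)-\tfrac1{2\pi}(\beta-\alpha)$. $\partial_\zeta=\tfrac12(\partial_{\mathrm{Re}\zeta}-i\partial_{\mathrm{Im}\zeta})$ is the Wirtinger derivative. $\mathbb R^{2+1}\cong\mathbb C\times\mathbb R$ carries the Lorentz metric $dx^2+dy^2-d\vartheta^2$ for $(x+iy,\vartheta)$. (In the paper these $z,\vartheta$ are the limits of the symmetric t-embeddings and of the real part of the rotated origami maps of homogeneous Aztec diamonds, with $\zeta=\rho e^{i\phi}$, $r=\sqrt2\rho/(1+\rho^2)$.) *)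

(* Defs.v *)
From Stdlib Require Import Reals.
Open Scope R_scope.

Definition C := (R * R)%type.
Definition Cadd (z w : C) : C := (fst z + fst w, snd z + snd w).
Definition Csub (z w : C) : C := (fst z - fst w, snd z - snd w).
Definition Cmul (z w : C) : C :=
  (fst z * fst w - snd z * snd w, fst z * snd w + snd z * fst w).
Definition Cscal (r : R) (z : C) : C := (r * fst z, r * snd z).
Definition Cdiv (z w : C) : C :=
  let d := fst w * fst w + snd w * snd w in
  ((fst z * fst w + snd z * snd w) / d, (snd z * fst w - fst z * snd w) / d).
Definition Cexpi (t : R) : C := (cos t, sin t).
Definition Ci : C := (0, 1).

Definition Arg (w : C) : R :=
  let a := fst w in let b := snd w in
  if Rlt_dec 0 a then atan (b / a)
  else if Rlt_dec a 0 then
    (if Rle_dec 0 b then atan (b / a) + PI else atan (b / a) - PI)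
  else if Rlt_dec 0 b then PI / 2
  else if Rlt_dec b 0 then - (PI / 2) else 0.

Definition Arg02pi (w : C) : R :=
  let t := Arg w in if Rlt_dec t 0 then t + 2 * PI else t.

Definition in_disc (x y : R) : Prop := x * x + y * y < 1.

(* Harmonic measure of the arc (e^{i alpha}, e^{i beta}) at zeta = x + i y:
   hm = (1/PI) (arg(e^{i beta} - zeta) - arg(e^{i alpha} - zeta)) - (beta-alpha)/(2 PI),
   where the difference of arguments is the (continuous, for zeta in the disc)
   determination in (0, 2 PI), i.e. the argument of the quotient taken in [0,2PI). *)
Definition hm (alpha beta : R) (x y : R) : R :=
  / PI * Arg02pi (Cdiv (Csub (Cexpi beta) (x, y)) (Csub (Cexpi alpha) (x, y)))
  - (beta - alpha) / (2 * PI).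

Definition hE := hm (- (PI / 4)) (PI / 4).
Definition hN := hm (PI / 4) (3 * PI / 4).
Definition hW := hm (3 * PI / 4) (5 * PI / 4).
Definition hS := hm (5 * PI / 4) (7 * PI / 4).

(* z = hE + i hN - hW - i hS, split into real and imaginary parts *)
Definition zre (x y : R) : R := hE x y - hW x y.
Definition zim (x y : R) : R := hN x y - hS x y.
Definition theta (x y : R) : R :=
  sqrt 2 / 2 * (hE x y - hN x y + hW x y - hS x y).

Definition pdx (f : R -> R -> R) (x y l : R) : Prop :=
  derivable_pt_lim (fun t => f t y) x l.
Definition pdy (f : R -> R -> R) (x y l : R) : Prop :=
  derivable_pt_lim (fun t => f x t) y l.

Definition cont2_at (f : R -> R -> R) (x y : R) : Prop :=
  forall eps, 0 < eps -> exists delta, 0 < delta /\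
    forall x' y', (x' - x) * (x' - x) + (y' - y) * (y' - y) < delta * delta ->
      Rabs (f x' y' - f x y) < eps.

Definition harmonic_on_disc (f : R -> R -> R) : Prop :=
  exists fx fy fxx fxy fyx fyy : R -> R -> R,
    forall x y, in_disc x y ->
      pdx f x y (fx x y) /\ pdy f x y (fy x y) /\
      pdx fx x y (fxx x y) /\ pdy fx x y (fxy x y) /\
      pdx fy x y (fyx x y) /\ pdy fy x y (fyy x y) /\
      cont2_at fxx x y /\ cont2_at fxy x y /\
      cont2_at fyx x y /\ cont2_at fyy x y /\
      fxx x y + fyy x y = 0.

(* Wirtinger derivative d_zeta = (1/2)(d_x - i d_y) of a complex-valued function
   from the values of its partial derivatives fx, fy (complex numbers) *)
Definition wirtinger (fx fy : C) : C := Cscal (/ 2) (Csub fx (Cmul Ci fy)).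

(* ---------- points of R^{2+1} = C x R, written (Re, Im, vartheta) ---------- *)
Definition P3 := (R * R * R)%type.
Definition Fmap (x y : R) : P3 := (zre x y, zim x y, theta x y).

Definition close3 (p q : P3) (eps : R) : Prop :=
  let '(a1, b1, c1) := p in let '(a2, b2, c2) := q in
  Rabs (a1 - a2) < eps /\ Rabs (b1 - b2) < eps /\ Rabs (c1 - c2) < eps.

Definition tends_to_at (px py : R) (v : P3) : Prop :=
  forall eps, 0 < eps -> exists delta, 0 < delta /\
    forall x y, in_disc x y ->
      (x - px) * (x - px) + (y - py) * (y - py) < delta * delta ->
      close3 (Fmap x y) v eps.

Definition boundary_limit_point (w : P3) : Prop :=
  forall eps delta, 0 < eps -> 0 < delta ->
    exists x y, in_disc x y /\ 1 - delta < x * x + y * y /\ close3 (Fmap x y) w eps.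

Definition vE : P3 := (1, 0, sqrt 2 / 2).
Definition vN : P3 := (0, 1, - (sqrt 2 / 2)).
Definition vW : P3 := (-1, 0, sqrt 2 / 2).
Definition vS : P3 := (0, -1, - (sqrt 2 / 2)).

Definition on_segment (a b w : P3) : Prop :=
  exists t, 0 <= t <= 1 /\
    let '(a1, a2, a3) := a in let '(b1, b2, b3) := b in
    w = ((1 - t) * a1 + t * b1, (1 - t) * a2 + t * b2, (1 - t) * a3 + t * b3).

Definition in_quad (w : P3) : Prop :=
  on_segment vE vN w \/ on_segment vN vW w \/ on_segment vW vS w \/ on_segment vS vE w.

(* Main.v *)
Require Import Defs.
From Stdlib Require Import Reals Lra Psatz.
From Coquelicot Require Import Coquelicot.
Import Defs.
Open Scope R_scope.

Definition Sg (a1 a2 x y : R) : R := a1*a1 + a2*a2 + x*x + y*y - 2*(a1*(x+y) + a2*(y-x)).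
Definition dg (a1 a2 x y : R) : R := a1*a1 + a2*a2 - x*x - y*y.
Definition Hg (a1 a2 x y : R) : R := /2 - atan (Sg a1 a2 x y / dg a1 a2 x y) / PI.
Definition PX (p1 p2 x y : R) : R := (p2 - y) / ((p1-x)*(p1-x) + (p2-y)*(p2-y)).
Definition PY (p1 p2 x y : R) : R := - (p1 - x) / ((p1-x)*(p1-x) + (p2-y)*(p2-y)).
Definition HX a1 a2 x y := (PX (-a2) a1 x y - PX a1 a2 x y) / PI.
Definition HY a1 a2 x y := (PY (-a2) a1 x y - PY a1 a2 x y) / PI.

Lemma sq_sum0 p q : p*p + q*q = 0 -> p = 0 /\ q = 0.
Proof. intros H. assert (p*p = 0) by nra. assert (q*q=0) by nra. split; nra. Qed.

Lemma sqn p : 0 <= p*p.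
Proof. apply Rle_0_sqr. Qed.

Lemma Hg_dir a1 a2 x0 y0 e1 e2 l :
  0 < dg a1 a2 (x0 + l*e1) (y0 + l*e2) ->
  is_derive (fun l => Hg a1 a2 (x0+l*e1) (y0+l*e2)) l
    (e1 * HX a1 a2 (x0 + l*e1) (y0 + l*e2) + e2 * HY a1 a2 (x0 + l*e1) (y0 + l*e2)).
Proof.
  intros H.
  set (x := x0 + l*e1) in *. set (y := y0 + l*e2) in *.
  assert (DA : (a1-x)*(a1-x) + (a2-y)*(a2-y) <> 0).
  { intro E. apply sq_sum0 in E. destruct E as [E1 E2]. unfold dg in H.
    replace x with a1 in H by lra. replace y with a2 in H by lra. lra. }
  assert (DB : (-a2-x)*(-a2-x) + (a1-y)*(a1-y) <> 0).
  { intro E. apply sq_sum0 in E. destruct E as [E1 E2]. unfold dg in H.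
    replace x with (-a2) in H by lra. replace y with a1 in H by lra. lra. }
  unfold Hg, HX, HY, PX, PY, Sg. unfold dg in *.
  auto_derive.
  { fold x y. lra. }
  fold x y.
  assert (PI <> 0) by (apply PI_neq0).
  field. repeat split; auto; try lra.
  intro E. nra.
Qed.

Lemma cos_atan_neq0 r : cos (atan r) <> 0.
Proof. destruct (atan_bound r). apply Rgt_not_eq, cos_gt_0; lra. Qed.

Lemma atan_aux1 r : r < 1 -> atan ((1+r)/(r-1)) = - atan r - PI/4.
Proof.
  intros Hr.
  assert (Hb := atan_bound r).
  assert (Ha : atan r < PI/4) by (rewrite <- atan_1; apply atan_increasing; lra).
  assert (HP := PI_RGT_0).
  set (g := atan r + PI/4).
  assert (Ht : tan g = (r+1)/(1-r)).
  { unfold g. rewrite tan_plus.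
    - rewrite tan_atan, tan_PI4. f_equal; ring.
    - apply cos_atan_neq0.
    - apply Rgt_not_eq, cos_gt_0; lra.
    - apply Rgt_not_eq, cos_gt_0; unfold g in *; lra.
    - rewrite tan_atan, tan_PI4. lra. }
  replace ((1+r)/(r-1)) with (- ((r+1)/(1-r))) by (field; lra).
  rewrite atan_opp, <- Ht, atan_tan. unfold g; ring. unfold g; lra.
Qed.

Lemma atan_aux2 r : 1 < r -> atan ((1+r)/(r-1)) = 3*PI/4 - atan r.
Proof.
  intros Hr.
  assert (Hb := atan_bound r).
  assert (Ha : PI/4 < atan r) by (rewrite <- atan_1; apply atan_increasing; lra).
  assert (HP := PI_RGT_0).
  set (g := atan r - PI/4).
  assert (Ht : tan g = (r-1)/(1+r)).
  { unfold g. rewrite tan_minus.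
    - rewrite tan_atan, tan_PI4. f_equal; ring.
    - apply cos_atan_neq0.
    - apply Rgt_not_eq, cos_gt_0; lra.
    - apply Rgt_not_eq, cos_gt_0; unfold g in *; lra.
    - rewrite tan_atan, tan_PI4. lra. }
  replace ((1+r)/(r-1)) with (/ ((r-1)/(1+r))) by (field; lra).
  rewrite atan_inv.
  - rewrite <- Ht, atan_tan. unfold g; field. unfold g; lra.
  - apply Rdiv_lt_0_compat; lra.
Qed.

Lemma Arg02pi_half X Y : X < Y -> Arg02pi (X,Y) = 3*PI/4 - atan ((X+Y)/(Y-X)).
Proof.
  intros H. assert (HP := PI_RGT_0).
  unfold Arg02pi, Arg; simpl.
  destruct (Rlt_dec 0 X) as [H1|H1].
  - assert (Hr : 1 < Y/X) by (apply Rlt_div_r; lra).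
    assert (Hpos : 0 < atan (Y/X)) by (rewrite <- atan_0; apply atan_increasing; lra).
    destruct (Rlt_dec (atan (Y/X)) 0); [lra|].
    replace ((X+Y)/(Y-X)) with ((1 + Y/X)/(Y/X - 1)) by (field; lra).
    rewrite atan_aux2 by lra. ring.
  - destruct (Rlt_dec X 0) as [H2|H2].
    + assert (Hr : Y/X < 1).
      { apply Rmult_lt_reg_r with (r := -X); [lra|].
        replace (Y/X * -X) with (-Y) by (field; lra). lra. }
      assert (Hb := atan_bound (Y/X)).
      replace ((X+Y)/(Y-X)) with ((1 + Y/X)/(Y/X - 1)) by (field; lra).
      rewrite atan_aux1 by lra.
      destruct (Rle_dec 0 Y).
      * destruct (Rlt_dec (atan (Y / X) + PI) 0); [lra|]. lra.
      * destruct (Rlt_dec (atan (Y / X) - PI) 0); [|lra]. lra.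
    + assert (X = 0) by lra. subst X.
      destruct (Rlt_dec 0 Y); [|lra].
      destruct (Rlt_dec (PI/2) 0); [lra|].
      replace ((0+Y)/(Y-0)) with 1 by (field; lra). rewrite atan_1. field.
Qed.

Lemma hm_Hg alpha beta a1 a2 x y :
  cos alpha = a1 -> sin alpha = a2 -> cos beta = - a2 -> sin beta = a1 ->
  beta - alpha = PI/2 -> a1*a1 + a2*a2 = 1 -> in_disc x y ->
  hm alpha beta x y = Hg a1 a2 x y.
Proof.
  intros c1 s1 c2 s2 ba un Hd. unfold in_disc in Hd.
  assert (HP := PI_RGT_0).
  unfold hm, Cexpi, Csub, Cdiv. simpl. rewrite c1, s1, c2, s2, ba.
  assert (DA : (a1-x)*(a1-x) + (a2-y)*(a2-y) <> 0).
  { intro E. apply sq_sum0 in E. destruct E as [E1 E2].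
    replace x with a1 in Hd by lra. replace y with a2 in Hd by lra. lra. }
  rewrite Arg02pi_half.
  - unfold Hg.
    assert (Hdg : dg a1 a2 x y <> 0) by (unfold dg; lra).
    match goal with |- context [atan ?t] => replace t with
      (Sg a1 a2 x y / dg a1 a2 x y) end.
    + field. lra.
    + unfold Sg, dg in *. field. split; [auto|].
      match goal with |- ?e <> 0 => replace e with (a1 * a1 + a2 * a2 - x * x - y * y) by ring end.
      auto.
  - unfold Rdiv. apply Rmult_lt_compat_r.
    + apply Rinv_0_lt_compat. pose proof (sqn (a1-x)). pose proof (sqn (a2-y)). lra.
    + match goal with |- ?a < ?b => assert (b - a = a1 * a1 + a2 * a2 - x * x - y * y) by ring end.
      lra.
Qed.

Definition s := sqrt 2 / 2.
Lemma s_sq : s * s = 1/2.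
Proof. unfold s. assert (H := sqrt_sqrt 2). assert (0 <= 2) by lra. specialize (H H0). nra. Qed.
Lemma s_pos : 0 < s.
Proof. unfold s. assert (0 < sqrt 2) by (apply sqrt_lt_R0; lra). lra. Qed.
Lemma cosPI4 : cos (PI/4) = s.
Proof. rewrite cos_PI4. unfold s. assert (0 < sqrt 2) by (apply sqrt_lt_R0; lra).
  assert (H2 : sqrt 2 * sqrt 2 = 2) by (apply sqrt_sqrt; lra). field_simplify_eq; [nra|lra]. Qed.
Lemma sinPI4 : sin (PI/4) = s.
Proof. rewrite sin_PI4. rewrite <- cos_PI4. apply cosPI4. Qed.
Lemma trig_E : cos (-(PI/4)) = s /\ sin (-(PI/4)) = -s.
Proof. rewrite cos_neg, sin_neg, cosPI4, sinPI4. auto. Qed.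
Lemma trig_N : cos (3*PI/4) = -s /\ sin (3*PI/4) = s.
Proof. replace (3*PI/4) with (PI/4 + PI/2) by field.
  rewrite cos_plus, sin_plus, cos_PI2, sin_PI2, cosPI4, sinPI4. split; ring. Qed.
Lemma trig_W : cos (5*PI/4) = -s /\ sin (5*PI/4) = -s.
Proof. replace (5*PI/4) with (PI/4 + PI) by field.
  rewrite cos_plus, sin_plus, cos_PI, sin_PI, cosPI4, sinPI4. split; ring. Qed.
Lemma trig_S : cos (7*PI/4) = s /\ sin (7*PI/4) = -s.
Proof. replace (7*PI/4) with (3*PI/4 + PI) by field. destruct trig_N as [c1 s1].
  rewrite cos_plus, sin_plus, cos_PI, sin_PI, c1, s1. split; ring. Qed.

Lemma un_s : forall a b, (a = s \/ a = -s) -> (b = s \/ b = -s) -> a*a + b*b = 1.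
Proof. intros a b [->| ->] [->| ->]; pose proof s_sq; nra. Qed.

Lemma hE_eq x y : in_disc x y -> hE x y = Hg s (-s) x y.
Proof. intros. destruct trig_E. unfold hE. apply hm_Hg; try assumption; try (apply un_s; auto); try (rewrite ?cosPI4, ?sinPI4; first [ring | lra]); try lra; try (rewrite ?cosPI4, ?sinPI4, ?H0, ?H1, ?H2, ?H3; ring).
Qed.
Lemma hN_eq x y : in_disc x y -> hN x y = Hg s s x y.
Proof. intros. destruct trig_N. unfold hN. apply hm_Hg; try assumption; try (apply un_s; auto); try (rewrite ?cosPI4, ?sinPI4; first [ring | lra]); try lra; try (rewrite ?cosPI4, ?sinPI4, ?H0, ?H1, ?H2, ?H3; ring).
Qed.
Lemma hW_eq x y : in_disc x y -> hW x y = Hg (-s) s x y.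
Proof. intros. destruct trig_N, trig_W. unfold hW. apply hm_Hg; try assumption; try (apply un_s; auto); try (rewrite ?cosPI4, ?sinPI4; first [ring | lra]); try lra; try (rewrite ?cosPI4, ?sinPI4, ?H0, ?H1, ?H2, ?H3; ring).
Qed.
Lemma hS_eq x y : in_disc x y -> hS x y = Hg (-s) (-s) x y.
Proof. intros. destruct trig_S, trig_W. unfold hS. apply hm_Hg; try assumption; try (apply un_s; auto); try (rewrite ?cosPI4, ?sinPI4; first [ring | lra]); try lra; try (rewrite ?cosPI4, ?sinPI4, ?H0, ?H1, ?H2, ?H3; ring).
Qed.

Lemma Hg_pdx a1 a2 x y : 0 < dg a1 a2 x y -> is_derive (fun t => Hg a1 a2 t y) x (HX a1 a2 x y).
Proof.
  intros H. assert (H' : 0 < dg a1 a2 (0 + x*1) (y + x*0)) by (replace (0+x*1) with x by ring;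
    replace (y + x*0) with y by ring; auto).
  pose proof (Hg_dir a1 a2 0 y 1 0 x H') as D.
  replace (0+x*1) with x in D by ring. replace (y + x*0) with y in D by ring.
  replace (HX a1 a2 x y) with (1 * HX a1 a2 x y + 0 * HY a1 a2 x y) by ring.
  eapply is_derive_ext; [|exact D]. intros t. simpl. f_equal; ring.
Qed.

Lemma Hg_pdy a1 a2 x y : 0 < dg a1 a2 x y -> is_derive (fun t => Hg a1 a2 x t) y (HY a1 a2 x y).
Proof.
  intros H. assert (H' : 0 < dg a1 a2 (x + y*0) (0 + y*1)) by (replace (0+y*1) with y by ring;
    replace (x + y*0) with x by ring; auto).
  pose proof (Hg_dir a1 a2 x 0 0 1 y H') as D.
  replace (0+y*1) with y in D by ring. replace (x + y*0) with x in D by ring.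
  replace (HY a1 a2 x y) with (0 * HX a1 a2 x y + 1 * HY a1 a2 x y) by ring.
  eapply is_derive_ext; [|exact D]. intros t. simpl. f_equal; ring.
Qed.

Definition PXX p1 p2 x y := 2*(p1-x)*(p2-y) / (((p1-x)*(p1-x) + (p2-y)*(p2-y))*((p1-x)*(p1-x) + (p2-y)*(p2-y))).
Definition PXY p1 p2 x y := ((p2-y)*(p2-y) - (p1-x)*(p1-x)) / (((p1-x)*(p1-x) + (p2-y)*(p2-y))*((p1-x)*(p1-x) + (p2-y)*(p2-y))).
Definition PYY p1 p2 x y := - (2*(p1-x)*(p2-y) / (((p1-x)*(p1-x) + (p2-y)*(p2-y))*((p1-x)*(p1-x) + (p2-y)*(p2-y)))).

Lemma PX_pdx p1 p2 x y : (p1-x)*(p1-x) + (p2-y)*(p2-y) <> 0 ->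
  is_derive (fun t => PX p1 p2 t y) x (PXX p1 p2 x y).
Proof. intros H. unfold PX, PXX. auto_derive; auto. field. auto. Qed.
Lemma PX_pdy p1 p2 x y : (p1-x)*(p1-x) + (p2-y)*(p2-y) <> 0 ->
  is_derive (fun t => PX p1 p2 x t) y (PXY p1 p2 x y).
Proof. intros H. unfold PX, PXY. auto_derive; auto. field. auto. Qed.
Lemma PY_pdx p1 p2 x y : (p1-x)*(p1-x) + (p2-y)*(p2-y) <> 0 ->
  is_derive (fun t => PY p1 p2 t y) x (PXY p1 p2 x y).
Proof. intros H. unfold PY, PXY. auto_derive; auto. field. auto. Qed.
Lemma PY_pdy p1 p2 x y : (p1-x)*(p1-x) + (p2-y)*(p2-y) <> 0 ->
  is_derive (fun t => PY p1 p2 x t) y (PYY p1 p2 x y).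
Proof. intros H. unfold PY, PYY. auto_derive; auto. field. auto. Qed.

Lemma der_lin2 (f g : R -> R) df dg a b x :
  is_derive f x df -> is_derive g x dg ->
  is_derive (fun t => a * f t + b * g t) x (a*df + b*dg).
Proof.
  intros H1 H2. apply is_derive_Reals in H1. apply is_derive_Reals in H2. apply is_derive_Reals.
  exact (derivable_pt_lim_plus _ _ _ _ _ (derivable_pt_lim_scal _ a _ _ H1) (derivable_pt_lim_scal _ b _ _ H2)).
Qed.

Lemma der_lin4 (f0 f1 f2 f3 : R -> R) d0 d1 d2 d3 l0 l1 l2 l3 x :
  is_derive f0 x d0 -> is_derive f1 x d1 -> is_derive f2 x d2 -> is_derive f3 x d3 ->
  is_derive (fun t => l0 * f0 t + l1 * f1 t + l2 * f2 t + l3 * f3 t) x (l0*d0 + l1*d1 + l2*d2 + l3*d3).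
Proof.
  intros H0 H1 H2 H3. apply is_derive_Reals in H0. apply is_derive_Reals in H1.
  apply is_derive_Reals in H2. apply is_derive_Reals in H3. apply is_derive_Reals.
  exact (derivable_pt_lim_plus _ _ _ _ _ (derivable_pt_lim_plus _ _ _ _ _
     (derivable_pt_lim_plus _ _ _ _ _ (derivable_pt_lim_scal _ l0 _ _ H0) (derivable_pt_lim_scal _ l1 _ _ H1))
     (derivable_pt_lim_scal _ l2 _ _ H2)) (derivable_pt_lim_scal _ l3 _ _ H3)).
Qed.

Definition HXX a1 a2 x y := (PXX (-a2) a1 x y - PXX a1 a2 x y) / PI.
Definition HXY a1 a2 x y := (PXY (-a2) a1 x y - PXY a1 a2 x y) / PI.
Definition HYY a1 a2 x y := (PYY (-a2) a1 x y - PYY a1 a2 x y) / PI.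

Lemma DA_ne a1 a2 x y : 0 < dg a1 a2 x y -> (a1-x)*(a1-x) + (a2-y)*(a2-y) <> 0.
Proof. intros H E. apply sq_sum0 in E. destruct E as [E1 E2]. unfold dg in H.
    replace x with a1 in H by lra. replace y with a2 in H by lra. lra. Qed.
Lemma DB_ne a1 a2 x y : 0 < dg a1 a2 x y -> (-a2-x)*(-a2-x) + (a1-y)*(a1-y) <> 0.
Proof. intros H E. apply sq_sum0 in E. destruct E as [E1 E2]. unfold dg in H.
    replace x with (-a2) in H by lra. replace y with a1 in H by lra. lra. Qed.

Lemma HX_pdx a1 a2 x y : 0 < dg a1 a2 x y -> is_derive (fun t => HX a1 a2 t y) x (HXX a1 a2 x y).
Proof. intros H. pose proof (der_lin2 _ _ _ _ (/PI) (-/PI) x (PX_pdx _ _ x y (DB_ne _ _ _ _ H)) (PX_pdx _ _ x y (DA_ne _ _ _ _ H))) as D.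
  unfold HX, HXX. replace ((PXX (- a2) a1 x y - PXX a1 a2 x y) / PI) with
   (/ PI * PXX (- a2) a1 x y + - / PI * PXX a1 a2 x y) by (unfold Rdiv; ring).
  eapply is_derive_ext; [|exact D]. intros t; simpl. unfold Rdiv; ring. Qed.
Lemma HX_pdy a1 a2 x y : 0 < dg a1 a2 x y -> is_derive (fun t => HX a1 a2 x t) y (HXY a1 a2 x y).
Proof. intros H. pose proof (der_lin2 _ _ _ _ (/PI) (-/PI) y (PX_pdy _ _ x y (DB_ne _ _ _ _ H)) (PX_pdy _ _ x y (DA_ne _ _ _ _ H))) as D.
  unfold HX, HXY. replace ((PXY (- a2) a1 x y - PXY a1 a2 x y) / PI) with
   (/ PI * PXY (- a2) a1 x y + - / PI * PXY a1 a2 x y) by (unfold Rdiv; ring).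
  eapply is_derive_ext; [|exact D]. intros t; simpl. unfold Rdiv; ring. Qed.
Lemma HY_pdx a1 a2 x y : 0 < dg a1 a2 x y -> is_derive (fun t => HY a1 a2 t y) x (HXY a1 a2 x y).
Proof. intros H. pose proof (der_lin2 _ _ _ _ (/PI) (-/PI) x (PY_pdx _ _ x y (DB_ne _ _ _ _ H)) (PY_pdx _ _ x y (DA_ne _ _ _ _ H))) as D.
  unfold HY, HXY. replace ((PXY (- a2) a1 x y - PXY a1 a2 x y) / PI) with
   (/ PI * PXY (- a2) a1 x y + - / PI * PXY a1 a2 x y) by (unfold Rdiv; ring).
  eapply is_derive_ext; [|exact D]. intros t; simpl. unfold Rdiv; ring. Qed.
Lemma HY_pdy a1 a2 x y : 0 < dg a1 a2 x y -> is_derive (fun t => HY a1 a2 x t) y (HYY a1 a2 x y).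
Proof. intros H. pose proof (der_lin2 _ _ _ _ (/PI) (-/PI) y (PY_pdy _ _ x y (DB_ne _ _ _ _ H)) (PY_pdy _ _ x y (DA_ne _ _ _ _ H))) as D.
  unfold HY, HYY. replace ((PYY (- a2) a1 x y - PYY a1 a2 x y) / PI) with
   (/ PI * PYY (- a2) a1 x y + - / PI * PYY a1 a2 x y) by (unfold Rdiv; ring).
  eapply is_derive_ext; [|exact D]. intros t; simpl. unfold Rdiv; ring. Qed.

Definition C2 (f : R -> R -> R) x y := continuous (fun z : R*R => f (fst z) (snd z)) (x,y).

Lemma sq_lt_abs a d : a*a < d*d -> 0 < d -> Rabs a < d.
Proof. intros H1 H2. unfold Rabs. destruct (Rcase_abs a); nra. Qed.

Lemma C2_cont2 f x y : C2 f x y -> cont2_at f x y.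
Proof.
  intros H eps Heps.
  assert (L : locally (f x y) (ball (f x y) eps)) by (exists (mkposreal eps Heps); auto).
  specialize (H _ L). destruct H as [d Hd].
  exists d. split; [apply cond_pos|].
  intros x' y' Hxy.
  assert (Hx : Rabs (x' - x) < d).
  { apply sq_lt_abs; [|apply cond_pos]. pose proof (sqn (y'-y)). lra. }
  assert (Hy : Rabs (y' - y) < d).
  { apply sq_lt_abs; [|apply cond_pos]. pose proof (sqn (x'-x)). lra. }
  specialize (Hd (x', y')). simpl in Hd. apply Hd. split; simpl; assumption.
Qed.

Lemma C2_const c x y : C2 (fun _ _ => c) x y.
Proof. apply continuous_const. Qed.
Lemma C2_fst x y : C2 (fun a _ => a) x y.
Proof. apply continuous_fst. Qed.
Lemma C2_snd x y : C2 (fun _ b => b) x y.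
Proof. apply continuous_snd. Qed.
Lemma C2_plus f g x y : C2 f x y -> C2 g x y -> C2 (fun a b => f a b + g a b) x y.
Proof. intros H1 H2. apply (continuous_plus _ _ _ H1 H2). Qed.
Lemma C2_mult f g x y : C2 f x y -> C2 g x y -> C2 (fun a b => f a b * g a b) x y.
Proof. intros H1 H2. apply (continuous_mult _ _ _ H1 H2). Qed.
Lemma C2_opp f x y : C2 f x y -> C2 (fun a b => - f a b) x y.
Proof. intros H1. apply (continuous_opp _ _ H1). Qed.
Lemma C2_minus f g x y : C2 f x y -> C2 g x y -> C2 (fun a b => f a b - g a b) x y.
Proof. intros H1 H2. apply (C2_plus f (fun a b => - g a b)); auto. apply C2_opp; auto. Qed.
Lemma C2_inv f x y : C2 f x y -> f x y <> 0 -> C2 (fun a b => / f a b) x y.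
Proof. intros H1 H2. unfold C2. apply (continuous_comp (fun z : R*R => f (fst z) (snd z)) Rinv).
  exact H1. apply continuous_Rinv. exact H2. Qed.
Lemma C2_div f g x y : C2 f x y -> C2 g x y -> g x y <> 0 -> C2 (fun a b => f a b / g a b) x y.
Proof. intros H1 H2 H3. apply (C2_mult f (fun a b => / g a b)); auto. apply C2_inv; auto. Qed.

Ltac c2 := repeat match goal with
  | |- C2 (fun a b => ?u + ?v) _ _ => apply (C2_plus (fun a b => u) (fun a b => v))
  | |- C2 (fun a b => ?u - ?v) _ _ => apply (C2_minus (fun a b => u) (fun a b => v))
  | |- C2 (fun a b => ?u * ?v) _ _ => apply (C2_mult (fun a b => u) (fun a b => v))
  | |- C2 (fun a b => ?u / ?v) _ _ => apply (C2_div (fun a b => u) (fun a b => v))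
  | |- C2 (fun a b => - ?u) _ _ => apply (C2_opp (fun a b => u))
  | |- C2 (fun a b => / ?u) _ _ => apply (C2_inv (fun a b => u))
  | |- C2 (fun a b => a) _ _ => apply C2_fst
  | |- C2 (fun a b => b) _ _ => apply C2_snd
  | |- C2 (fun a b => _) _ _ => apply C2_const
  end.

Lemma PXX_C2 p1 p2 x y : (p1-x)*(p1-x) + (p2-y)*(p2-y) <> 0 -> C2 (PXX p1 p2) x y.
Proof. intros H. unfold PXX. c2. apply Rmult_integral_contrapositive; split; auto. Qed.
Lemma PXY_C2 p1 p2 x y : (p1-x)*(p1-x) + (p2-y)*(p2-y) <> 0 -> C2 (PXY p1 p2) x y.
Proof. intros H. unfold PXY. c2. apply Rmult_integral_contrapositive; split; auto. Qed.
Lemma PYY_C2 p1 p2 x y : (p1-x)*(p1-x) + (p2-y)*(p2-y) <> 0 -> C2 (PYY p1 p2) x y.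
Proof. intros H. unfold PYY. c2. apply Rmult_integral_contrapositive; split; auto. Qed.

Lemma ball_R (x e t : R) : ball x e t -> Rabs (t - x) < e.
Proof. intros H. exact H. Qed.

Lemma disc_loc_x x y : in_disc x y -> locally x (fun t => in_disc t y).
Proof.
  intros H. unfold in_disc in *.
  assert (He : 0 < (1 - x*x - y*y)/4) by lra.
  exists (mkposreal _ He). intros t Ht. apply ball_R in Ht. simpl in Ht.
  apply Rabs_def2 in Ht. destruct Ht as [H1 H2].
  assert (x*x < 1) by (pose proof (sqn y); lra).
  assert (-1 < x < 1) by nra.
  nra.
Qed.

Lemma disc_loc_y x y : in_disc x y -> locally y (fun t => in_disc x t).
Proof.
  intros H. unfold in_disc in *.
  assert (He : 0 < (1 - x*x - y*y)/4) by lra.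
  exists (mkposreal _ He). intros t Ht. apply ball_R in Ht. simpl in Ht.
  apply Rabs_def2 in Ht. destruct Ht as [H1 H2].
  assert (y*y < 1) by (pose proof (sqn x); lra).
  assert (-1 < y < 1) by nra.
  nra.
Qed.

Lemma dg_corner a b x y : (a = s \/ a = -s) -> (b = s \/ b = -s) -> in_disc x y -> 0 < dg a b x y.
Proof. intros Ha Hb H. unfold dg, in_disc in *. rewrite (un_s a b Ha Hb). lra. Qed.

Definition HYX := HXY.

Definition Lc (l0 l1 l2 l3 : R) (G : R -> R -> R -> R -> R) (x y : R) : R :=
  l0 * G s (-s) x y + l1 * G s s x y + l2 * G (-s) s x y + l3 * G (-s) (-s) x y.
Definition Fh (l0 l1 l2 l3 : R) (x y : R) : R := l0 * hE x y + l1 * hN x y + l2 * hW x y + l3 * hS x y.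

Ltac corners := first [left; reflexivity | right; reflexivity].

Lemma Fh_pdx (l0 l1 l2 l3 : R) x y : in_disc x y -> is_derive (fun t => Fh l0 l1 l2 l3 t y) x (Lc l0 l1 l2 l3 HX x y).
Proof.
  intros H. apply is_derive_ext_loc with (f := fun t => Lc l0 l1 l2 l3 Hg t y).
  - generalize (disc_loc_x x y H). apply filter_imp. intros t Ht. unfold Lc, Fh.
    rewrite hE_eq, hN_eq, hW_eq, hS_eq; auto.
  - unfold Lc. apply der_lin4; apply Hg_pdx; apply dg_corner; auto; corners.
Qed.
Lemma Fh_pdy (l0 l1 l2 l3 : R) x y : in_disc x y -> is_derive (fun t => Fh l0 l1 l2 l3 x t) y (Lc l0 l1 l2 l3 HY x y).
Proof.
  intros H. apply is_derive_ext_loc with (f := fun t => Lc l0 l1 l2 l3 Hg x t).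
  - generalize (disc_loc_y x y H). apply filter_imp. intros t Ht. unfold Lc, Fh.
    rewrite hE_eq, hN_eq, hW_eq, hS_eq; auto.
  - unfold Lc. apply der_lin4; apply Hg_pdy; apply dg_corner; auto; corners.
Qed.

Lemma Lc_pdx (l0 l1 l2 l3 : R) G GX x y : (forall a b, (a = s \/ a = -s) -> (b = s \/ b = -s) ->
   is_derive (fun t => G a b t y) x (GX a b x y)) ->
  is_derive (fun t => Lc l0 l1 l2 l3 G t y) x (Lc l0 l1 l2 l3 GX x y).
Proof. intros HG. unfold Lc. apply der_lin4; apply HG; corners. Qed.
Lemma Lc_pdy (l0 l1 l2 l3 : R) G GY x y : (forall a b, (a = s \/ a = -s) -> (b = s \/ b = -s) ->
   is_derive (fun t => G a b x t) y (GY a b x y)) ->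
  is_derive (fun t => Lc l0 l1 l2 l3 G x t) y (Lc l0 l1 l2 l3 GY x y).
Proof. intros HG. unfold Lc. apply der_lin4; apply HG; corners. Qed.

Lemma Lc_C2 (l0 l1 l2 l3 : R) G x y : (forall a b, (a = s \/ a = -s) -> (b = s \/ b = -s) -> C2 (G a b) x y) ->
  C2 (Lc l0 l1 l2 l3 G) x y.
Proof. intros HG. unfold Lc. c2; apply HG; corners. Qed.

Lemma HXX_C2 a b x y : 0 < dg a b x y -> C2 (HXX a b) x y.
Proof. intros H. unfold HXX. c2. apply PXX_C2, DB_ne, H. apply PXX_C2, DA_ne, H.
  apply PI_neq0. Qed.
Lemma HXY_C2 a b x y : 0 < dg a b x y -> C2 (HXY a b) x y.
Proof. intros H. unfold HXY. c2. apply PXY_C2, DB_ne, H. apply PXY_C2, DA_ne, H.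
  apply PI_neq0. Qed.
Lemma HYY_C2 a b x y : 0 < dg a b x y -> C2 (HYY a b) x y.
Proof. intros H. unfold HYY. c2. apply PYY_C2, DB_ne, H. apply PYY_C2, DA_ne, H.
  apply PI_neq0. Qed.

Lemma Fh_harmonic (l0 l1 l2 l3 : R) : harmonic_on_disc (Fh l0 l1 l2 l3).
Proof.
  exists (Lc l0 l1 l2 l3 HX), (Lc l0 l1 l2 l3 HY), (Lc l0 l1 l2 l3 HXX), (Lc l0 l1 l2 l3 HXY), (Lc l0 l1 l2 l3 HYX), (Lc l0 l1 l2 l3 HYY).
  intros x y H.
  repeat split.
  - apply is_derive_Reals, Fh_pdx, H.
  - apply is_derive_Reals, Fh_pdy, H.
  - apply is_derive_Reals, Lc_pdx. intros a b Ha Hb. apply HX_pdx, dg_corner; auto.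
  - apply is_derive_Reals, Lc_pdy. intros a b Ha Hb. apply HX_pdy, dg_corner; auto.
  - apply is_derive_Reals, Lc_pdx. intros a b Ha Hb. apply HY_pdx, dg_corner; auto.
  - apply is_derive_Reals, Lc_pdy. intros a b Ha Hb. apply HY_pdy, dg_corner; auto.
  - apply C2_cont2, Lc_C2. intros a b Ha Hb. apply HXX_C2, dg_corner; auto.
  - apply C2_cont2, Lc_C2. intros a b Ha Hb. apply HXY_C2, dg_corner; auto.
  - apply C2_cont2, Lc_C2. intros a b Ha Hb. apply HXY_C2, dg_corner; auto.
  - apply C2_cont2, Lc_C2. intros a b Ha Hb. apply HYY_C2, dg_corner; auto.
  - unfold Lc, HXX, HYY, PXX, PYY. unfold Rdiv. ring.
Qed.


Lemma ident2 x y : in_disc x y ->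
  let ux := Lc 1 0 (-1) 0 HX x y in let uy := Lc 1 0 (-1) 0 HY x y in
  let vx := Lc 0 1 0 (-1) HX x y in let vy := Lc 0 1 0 (-1) HY x y in
  let A := Lc 1 (-1) 1 (-1) HX x y in let B := Lc 1 (-1) 1 (-1) HY x y in
  Cmul (wirtinger (ux, vx) (uy, vy)) (wirtinger (ux, - vx) (uy, - vy))
  = Cscal (1/2) (Cmul (wirtinger (A, 0) (B, 0)) (wirtinger (A, 0) (B, 0))).
Proof.
  intros H ux uy vx vy A B.
  assert (D0 := DB_ne s (-s) x y (dg_corner _ _ _ _ (or_introl eq_refl) (or_intror eq_refl) H)).
  assert (D3 := DA_ne s (-s) x y (dg_corner _ _ _ _ (or_introl eq_refl) (or_intror eq_refl) H)).
  assert (D1 := DB_ne s s x y (dg_corner _ _ _ _ (or_introl eq_refl) (or_introl eq_refl) H)).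
  assert (D2 := DB_ne (-s) s x y (dg_corner _ _ _ _ (or_intror eq_refl) (or_introl eq_refl) H)).
  replace (- - s) with s in * by ring.
  assert (PI <> 0) by apply PI_neq0.
  unfold ux, uy, vx, vy, A, B, Lc, HX, HY, PX, PY.
  unfold Cmul, wirtinger, Cscal, Csub, Ci. simpl.
  replace (- - s) with s by ring.
  f_equal; field; repeat split; auto.
Qed.

Lemma Hg_origin a b : (a = s \/ a = -s) -> (b = s \/ b = -s) -> Hg a b 0 0 = /4.
Proof. intros Ha Hb. unfold Hg, Sg, dg. pose proof (un_s a b Ha Hb) as U.
  replace ((a * a + b * b + 0 * 0 + 0 * 0 - 2 * (a * (0 + 0) + b * (0 - 0))) /
     (a * a + b * b - 0 * 0 - 0 * 0)) with 1.
  rewrite atan_1. field. apply PI_neq0.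
  rewrite U. field. Qed.

Lemma Hsum x y : in_disc x y -> hE x y + hN x y + hW x y + hS x y = 1.
Proof.
  intros H.
  rewrite hE_eq, hN_eq, hW_eq, hS_eq by auto.
  set (G := fun l => Lc 1 1 1 1 Hg (0 + l*x) (0 + l*y)).
  assert (HD : forall c, 0 <= c <= 1 -> derivable_pt_lim G c 0).
  { intros c Hc. apply is_derive_Reals.
    assert (Hin : in_disc (0 + c*x) (0 + c*y)).
    { unfold in_disc in *. assert (c*c <= 1) by nra. pose proof (sqn x). pose proof (sqn y). nra. }
    replace 0 with (Lc 1 1 1 1 (fun a b u v => x * HX a b u v + y * HY a b u v) (0 + c*x) (0 + c*y)).
    - unfold G, Lc. apply der_lin4; apply Hg_dir, dg_corner; auto; first [left; reflexivity | right; reflexivity].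
    - unfold Lc, HX, HY. replace (- - s) with s by ring. unfold Rdiv. ring. }
  destruct (MVT_cor2 G (fun _ => 0) 0 1 ltac:(lra) HD) as [c [Hc _]].
  assert (G 1 = G 0) by lra.
  unfold G, Lc in H0. replace (0 + 1*x) with x in H0 by ring. replace (0 + 1*y) with y in H0 by ring.
  replace (0 + 0 * x) with 0 in H0 by ring. replace (0 + 0 * y) with 0 in H0 by ring.
  rewrite !Hg_origin in H0 by (first [left; reflexivity | right; reflexivity]). lra.
Qed.

Lemma Hg_bounds a b x y : 0 < Hg a b x y < 1.
Proof. unfold Hg. pose proof (atan_bound (Sg a b x y / dg a b x y)). pose proof PI_RGT_0.
  split.
  - assert (atan (Sg a b x y / dg a b x y) / PI < /2).
    { apply Rmult_lt_reg_r with PI; auto. unfold Rdiv. rewrite Rmult_assoc, Rinv_l by lra. lra. }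
    lra.
  - assert (- / 2 < atan (Sg a b x y / dg a b x y) / PI).
    { apply Rmult_lt_reg_r with PI; auto. unfold Rdiv. rewrite Rmult_assoc, Rinv_l by lra. lra. }
    lra.
Qed.

Lemma atan_big eps : 0 < eps -> exists M, 0 < M /\ forall T, M <= T -> /2 - atan T / PI < eps.
Proof.
  intros He. pose proof PI_RGT_0.
  set (e := Rmin (eps/2) (/4)).
  assert (He1 : 0 < e) by (apply Rmin_glb_lt; lra).
  assert (He2 : e <= eps/2) by apply Rmin_l.
  assert (He3 : e <= /4) by apply Rmin_r.
  exists (tan (PI/2 - PI*e)). split.
  - apply tan_gt_0; nra.
  - intros T HT. assert (atan (tan (PI/2 - PI*e)) <= atan T).
    { destruct (Req_dec (tan (PI/2 - PI*e)) T) as [E|E]. rewrite E; lra.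
      left. apply atan_increasing. lra. }
    rewrite atan_tan in H0 by nra.
    assert (/2 - e <= atan T / PI).
    { apply Rmult_le_reg_r with PI; auto. unfold Rdiv. rewrite Rmult_assoc, Rinv_l by lra. nra. }
    lra.
Qed.

Lemma Hg_small_gen eps c : 0 < eps -> 0 < c -> exists d0, 0 < d0 /\
  forall a b x y, (a = s \/ a = -s) -> (b = s \/ b = -s) -> in_disc x y ->
   1 - (x*x + y*y) < d0 -> c <= Sg a b x y -> Hg a b x y < eps.
Proof.
  intros He Hc. destruct (atan_big eps He) as [M [HM HT]].
  exists (c / M). split. apply Rdiv_lt_0_compat; auto.
  intros a b x y Ha Hb Hd Hr HS. unfold Hg. apply HT.
  assert (Hdg : dg a b x y = 1 - (x*x+y*y)) by (unfold dg; rewrite (un_s a b Ha Hb); ring).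
  rewrite Hdg. unfold in_disc in Hd.
  apply Rmult_le_reg_r with (1 - (x*x+y*y)); [lra|].
  unfold Rdiv. rewrite Rmult_assoc, Rinv_l by lra.
  assert (M * (1 - (x*x+y*y)) <= c).
  { apply Rmult_lt_compat_l with (r := M) in Hr; auto.
    replace (M * (c / M)) with c in Hr by (field; lra). lra. }
  lra.
Qed.

Lemma Hg_large_gen eps c : 0 < eps -> 0 < c -> exists d0, 0 < d0 /\
  forall a b x y, (a = s \/ a = -s) -> (b = s \/ b = -s) -> in_disc x y ->
   1 - (x*x + y*y) < d0 -> Sg a b x y <= - c -> 1 - eps < Hg a b x y.
Proof.
  intros He Hc. destruct (atan_big eps He) as [M [HM HT]].
  exists (c / M). split. apply Rdiv_lt_0_compat; auto.
  intros a b x y Ha Hb Hd Hr HS.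
  assert (Hdg : dg a b x y = 1 - (x*x+y*y)) by (unfold dg; rewrite (un_s a b Ha Hb); ring).
  unfold in_disc in Hd.
  assert (M <= - (Sg a b x y / dg a b x y)).
  { rewrite Hdg. apply Rmult_le_reg_r with (1 - (x*x+y*y)); [lra|].
    replace (- (Sg a b x y / (1 - (x * x + y * y))) * (1 - (x * x + y * y))) with (- Sg a b x y)
      by (field; lra).
    assert (M * (1 - (x*x+y*y)) <= c).
    { apply Rmult_lt_compat_l with (r := M) in Hr; auto.
      replace (M * (c / M)) with c in Hr by (field; lra). lra. }
    lra. }
  specialize (HT _ H). rewrite atan_opp in HT. unfold Hg.
  replace (- atan (Sg a b x y / dg a b x y) / PI) with (- (atan (Sg a b x y / dg a b x y) / PI)) in HT
    by (field; apply PI_neq0).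
  lra.
Qed.

Lemma Sg_C2 a b x y : C2 (Sg a b) x y.
Proof. unfold Sg. c2. Qed.
Lemma r2_C2 x y : C2 (fun u v => u*u + v*v) x y.
Proof. c2. Qed.

Lemma near_bd a b x0 y0 d0 c : x0*x0 + y0*y0 = 1 -> 0 < d0 -> 0 < c ->
  exists del, 0 < del /\ forall x y, (x-x0)*(x-x0) + (y-y0)*(y-y0) < del*del ->
    1 - (x*x+y*y) < d0 /\ Rabs (Sg a b x y - Sg a b x0 y0) < c.
Proof.
  intros H0 Hd Hc.
  destruct (C2_cont2 _ _ _ (Sg_C2 a b x0 y0) c Hc) as [d1 [Hd1 P1]].
  destruct (C2_cont2 _ _ _ (r2_C2 x0 y0) d0 Hd) as [d2 [Hd2 P2]].
  exists (Rmin d1 d2). split. apply Rmin_glb_lt; auto.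
  intros x y Hxy.
  assert (Rmin d1 d2 * Rmin d1 d2 <= d1 * d1).
  { pose proof (Rmin_l d1 d2). assert (0 < Rmin d1 d2) by (apply Rmin_glb_lt; auto). nra. }
  assert (Rmin d1 d2 * Rmin d1 d2 <= d2 * d2).
  { pose proof (Rmin_r d1 d2). assert (0 < Rmin d1 d2) by (apply Rmin_glb_lt; auto). nra. }
  split.
  - specialize (P2 x y ltac:(lra)). simpl in P2. rewrite H0 in P2.
    apply Rabs_def2 in P2. lra.
  - apply P1. lra.
Qed.

Lemma Hg_lim0 a b x0 y0 : (a = s \/ a = -s) -> (b = s \/ b = -s) -> x0*x0 + y0*y0 = 1 ->
  0 < Sg a b x0 y0 -> forall eps, 0 < eps -> exists del, 0 < del /\ forall x y, in_disc x y ->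
  (x-x0)*(x-x0) + (y-y0)*(y-y0) < del*del -> Hg a b x y < eps.
Proof.
  intros Ha Hb H0 HS eps He.
  destruct (Hg_small_gen eps (Sg a b x0 y0 / 2) He ltac:(lra)) as [d0 [Hd0 P]].
  destruct (near_bd a b x0 y0 d0 (Sg a b x0 y0 / 2) H0 Hd0 ltac:(lra)) as [del [Hdel Q]].
  exists del. split; auto. intros x y Hd Hxy. destruct (Q x y Hxy) as [Q1 Q2].
  apply Rabs_def2 in Q2. apply P; auto. lra.
Qed.

Lemma Hg_lim1 a b x0 y0 : (a = s \/ a = -s) -> (b = s \/ b = -s) -> x0*x0 + y0*y0 = 1 ->
  Sg a b x0 y0 < 0 -> forall eps, 0 < eps -> exists del, 0 < del /\ forall x y, in_disc x y ->
  (x-x0)*(x-x0) + (y-y0)*(y-y0) < del*del -> 1 - eps < Hg a b x y.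
Proof.
  intros Ha Hb H0 HS eps He.
  destruct (Hg_large_gen eps (- Sg a b x0 y0 / 2) He ltac:(lra)) as [d0 [Hd0 P]].
  destruct (near_bd a b x0 y0 d0 (- Sg a b x0 y0 / 2) H0 Hd0 ltac:(lra)) as [del [Hdel Q]].
  exists del. split; auto. intros x y Hd Hxy. destruct (Q x y Hxy) as [Q1 Q2].
  apply Rabs_def2 in Q2. apply P; auto. lra.
Qed.

Definition conv (h : R -> R -> R) (e x0 y0 : R) := forall eps, 0 < eps -> exists del, 0 < del /\
  forall x y, in_disc x y -> (x-x0)*(x-x0) + (y-y0)*(y-y0) < del*del -> Rabs (h x y - e) < eps.

Lemma conv0 h a b x0 y0 : (a = s \/ a = -s) -> (b = s \/ b = -s) -> x0*x0 + y0*y0 = 1 ->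
  (forall x y, in_disc x y -> h x y = Hg a b x y) -> 0 < Sg a b x0 y0 -> conv h 0 x0 y0.
Proof. intros Ha Hb H0 Hh HS eps He. destruct (Hg_lim0 a b x0 y0 Ha Hb H0 HS eps He) as [d [Hd P]].
  exists d; split; auto. intros x y Hx Hxy. rewrite Hh by auto. specialize (P x y Hx Hxy).
  pose proof (Hg_bounds a b x y). rewrite Rabs_pos_eq; lra. Qed.
Lemma conv1 h a b x0 y0 : (a = s \/ a = -s) -> (b = s \/ b = -s) -> x0*x0 + y0*y0 = 1 ->
  (forall x y, in_disc x y -> h x y = Hg a b x y) -> Sg a b x0 y0 < 0 -> conv h 1 x0 y0.
Proof. intros Ha Hb H0 Hh HS eps He. destruct (Hg_lim1 a b x0 y0 Ha Hb H0 HS eps He) as [d [Hd P]].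
  exists d; split; auto. intros x y Hx Hxy. rewrite Hh by auto. specialize (P x y Hx Hxy).
  pose proof (Hg_bounds a b x y). rewrite Rabs_minus_sym, Rabs_pos_eq; lra. Qed.

Lemma min4_pos a b c d : 0 < a -> 0 < b -> 0 < c -> 0 < d ->
  exists m, 0 < m /\ m <= a /\ m <= b /\ m <= c /\ m <= d.
Proof. intros. exists (Rmin (Rmin a b) (Rmin c d)).
  repeat split; try (repeat apply Rmin_glb_lt; auto).
  - eapply Rle_trans; [apply Rmin_l|apply Rmin_l].
  - eapply Rle_trans; [apply Rmin_l|apply Rmin_r].
  - eapply Rle_trans; [apply Rmin_r|apply Rmin_l].
  - eapply Rle_trans; [apply Rmin_r|apply Rmin_r].
Qed.

Lemma s_lt1 : s < 1.
Proof. pose proof s_sq; pose proof s_pos; nra. Qed.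

Lemma tends_gen x0 y0 e0 e1 e2 e3 : conv hE e0 x0 y0 -> conv hN e1 x0 y0 -> conv hW e2 x0 y0 ->
  conv hS e3 x0 y0 -> tends_to_at x0 y0 (e0 - e2, e1 - e3, s * (e0 - e1 + e2 - e3)).
Proof.
  intros C0 C1 C2' C3 eps He.
  destruct (C0 (eps/4) ltac:(lra)) as [d0 [H0 P0]].
  destruct (C1 (eps/4) ltac:(lra)) as [d1 [H1 P1]].
  destruct (C2' (eps/4) ltac:(lra)) as [d2 [H2 P2]].
  destruct (C3 (eps/4) ltac:(lra)) as [d3 [H3 P3]].
  destruct (min4_pos d0 d1 d2 d3 H0 H1 H2 H3) as [m [Hm [m0 [m1 [m2 m3]]]]].
  exists m. split; auto. intros x y Hx Hxy.
  assert (m*m <= d0*d0) by nra. assert (m*m <= d1*d1) by nra.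
  assert (m*m <= d2*d2) by nra. assert (m*m <= d3*d3) by nra.
  specialize (P0 x y Hx ltac:(lra)). specialize (P1 x y Hx ltac:(lra)).
  specialize (P2 x y Hx ltac:(lra)). specialize (P3 x y Hx ltac:(lra)).
  apply Rabs_def2 in P0. apply Rabs_def2 in P1. apply Rabs_def2 in P2. apply Rabs_def2 in P3.
  unfold close3, Fmap, zre, zim, theta. fold s.
  pose proof s_pos. pose proof s_lt1.
  repeat split; apply Rabs_def1; try lra.
  - assert (Eq : s * (hE x y - hN x y + hW x y - hS x y) - s * (e0 - e1 + e2 - e3)
            = s * ((hE x y - e0) - (hN x y - e1) + (hW x y - e2) - (hS x y - e3))) by ring.
    rewrite Eq. assert (Habs: Rabs ((hE x y - e0) - (hN x y - e1) + (hW x y - e2) - (hS x y - e3)) < eps)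
      by (apply Rabs_def1; lra).
    apply Rabs_def2 in Habs. nra.
  - assert (Eq : s * (hE x y - hN x y + hW x y - hS x y) - s * (e0 - e1 + e2 - e3)
            = s * ((hE x y - e0) - (hN x y - e1) + (hW x y - e2) - (hS x y - e3))) by ring.
    rewrite Eq. assert (Habs: Rabs ((hE x y - e0) - (hN x y - e1) + (hW x y - e2) - (hS x y - e3)) < eps)
      by (apply Rabs_def1; lra).
    apply Rabs_def2 in Habs. nra.
Qed.

Lemma SgE x0 y0 : x0*x0 + y0*y0 = 1 -> Sg s (-s) x0 y0 = 2 - 4*s*x0.
Proof. intros H. unfold Sg. pose proof s_sq. nra. Qed.
Lemma SgN x0 y0 : x0*x0 + y0*y0 = 1 -> Sg s s x0 y0 = 2 - 4*s*y0.
Proof. intros H. unfold Sg. pose proof s_sq. nra. Qed.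
Lemma SgW x0 y0 : x0*x0 + y0*y0 = 1 -> Sg (-s) s x0 y0 = 2 + 4*s*x0.
Proof. intros H. unfold Sg. pose proof s_sq. nra. Qed.
Lemma SgS x0 y0 : x0*x0 + y0*y0 = 1 -> Sg (-s) (-s) x0 y0 = 2 + 4*s*y0.
Proof. intros H. unfold Sg. pose proof s_sq. nra. Qed.

Lemma arc_facts psi : -(PI/4) < psi < PI/4 -> s < cos psi /\ -s < sin psi < s.
Proof.
  intros [H1 H2]. pose proof PI_RGT_0.
  assert (Hs1 : sin psi < s).
  { rewrite <- sinPI4. apply sin_increasing_1; lra. }
  assert (Hs2 : -s < sin psi).
  { destruct trig_E as [_ E]. rewrite <- E. apply sin_increasing_1; lra. }
  assert (Hc : 0 < cos psi) by (apply cos_gt_0; lra).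
  pose proof (sin2_cos2 psi) as P. unfold Rsqr in P.
  pose proof s_sq. pose proof s_pos.
  assert (sin psi * sin psi < s * s) by nra.
  split; [nra | lra].
Qed.

Lemma circ phi : cos phi * cos phi + sin phi * sin phi = 1.
Proof. pose proof (sin2_cos2 phi). unfold Rsqr in H. lra. Qed.

Ltac crn := first [left; reflexivity | right; reflexivity].

Lemma tendsE phi : - (PI / 4) < phi < PI / 4 -> tends_to_at (cos phi) (sin phi) vE.
Proof.
  intros Hp. destruct (arc_facts phi Hp) as [Hc Hs]. pose proof s_pos. pose proof s_sq.
  pose proof (circ phi) as U.
  replace vE with (1 - 0, 0 - 0, s * (1 - 0 + 0 - 0)) by (unfold vE, s; f_equal; [f_equal|]; ring).
  apply tends_gen.
  - apply (conv1 _ s (-s)); try crn; auto. apply hE_eq. rewrite SgE by auto. nra.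
  - apply (conv0 _ s s); try crn; auto. apply hN_eq. rewrite SgN by auto. nra.
  - apply (conv0 _ (-s) s); try crn; auto. apply hW_eq. rewrite SgW by auto. nra.
  - apply (conv0 _ (-s) (-s)); try crn; auto. apply hS_eq. rewrite SgS by auto. nra.
Qed.

Lemma tendsN phi : PI / 4 < phi < 3 * PI / 4 -> tends_to_at (cos phi) (sin phi) vN.
Proof.
  intros Hp. destruct (arc_facts (phi - PI/2)) as [Hc Hs]. lra.
  replace (cos (phi - PI/2)) with (sin phi) in Hc by (rewrite cos_minus, cos_PI2, sin_PI2; ring).
  replace (sin (phi - PI/2)) with (- cos phi) in Hs by (rewrite sin_minus, cos_PI2, sin_PI2; ring).
  pose proof s_pos. pose proof s_sq.
  pose proof (circ phi) as U.
  replace vN with (0 - 0, 1 - 0, s * (0 - 1 + 0 - 0)) by (unfold vN, s; f_equal; [f_equal|]; ring).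
  apply tends_gen.
  - apply (conv0 _ s (-s)); try crn; auto. apply hE_eq. rewrite SgE by auto. nra.
  - apply (conv1 _ s s); try crn; auto. apply hN_eq. rewrite SgN by auto. nra.
  - apply (conv0 _ (-s) s); try crn; auto. apply hW_eq. rewrite SgW by auto. nra.
  - apply (conv0 _ (-s) (-s)); try crn; auto. apply hS_eq. rewrite SgS by auto. nra.
Qed.

Lemma tendsW phi : 3 * PI / 4 < phi < 5 * PI / 4 -> tends_to_at (cos phi) (sin phi) vW.
Proof.
  intros Hp. destruct (arc_facts (phi - PI)) as [Hc Hs]. lra.
  replace (cos (phi - PI)) with (- cos phi) in Hc by (rewrite cos_minus, cos_PI, sin_PI; ring).
  replace (sin (phi - PI)) with (- sin phi) in Hs by (rewrite sin_minus, cos_PI, sin_PI; ring).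
  pose proof s_pos. pose proof s_sq.
  pose proof (circ phi) as U.
  replace vW with (0 - 1, 0 - 0, s * (0 - 0 + 1 - 0)) by (unfold vW, s; f_equal; [f_equal|]; ring).
  apply tends_gen.
  - apply (conv0 _ s (-s)); try crn; auto. apply hE_eq. rewrite SgE by auto. nra.
  - apply (conv0 _ s s); try crn; auto. apply hN_eq. rewrite SgN by auto. nra.
  - apply (conv1 _ (-s) s); try crn; auto. apply hW_eq. rewrite SgW by auto. nra.
  - apply (conv0 _ (-s) (-s)); try crn; auto. apply hS_eq. rewrite SgS by auto. nra.
Qed.

Lemma tendsS phi : 5 * PI / 4 < phi < 7 * PI / 4 -> tends_to_at (cos phi) (sin phi) vS.
Proof.
  intros Hp. destruct (arc_facts (phi - 3*(PI/2))) as [Hc Hs]. lra.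
  replace (cos (phi - 3*(PI/2))) with (- sin phi) in Hc by (rewrite cos_minus, cos_3PI2, sin_3PI2; ring).
  replace (sin (phi - 3*(PI/2))) with (cos phi) in Hs by (rewrite sin_minus, cos_3PI2, sin_3PI2; ring).
  pose proof s_pos. pose proof s_sq.
  pose proof (circ phi) as U.
  replace vS with (0 - 0, 0 - 1, s * (0 - 0 + 0 - 1)) by (unfold vS, s; f_equal; [f_equal|]; ring).
  apply tends_gen.
  - apply (conv0 _ s (-s)); try crn; auto. apply hE_eq. rewrite SgE by auto. nra.
  - apply (conv0 _ s s); try crn; auto. apply hN_eq. rewrite SgN by auto. nra.
  - apply (conv0 _ (-s) s); try crn; auto. apply hW_eq. rewrite SgW by auto. nra.
  - apply (conv1 _ (-s) (-s)); try crn; auto. apply hS_eq. rewrite SgS by auto. nra.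
Qed.

Lemma SgE' x y : Sg s (-s) x y = 1 + (x*x+y*y) - 4*s*x.
Proof. unfold Sg. pose proof s_sq. nra. Qed.
Lemma SgN' x y : Sg s s x y = 1 + (x*x+y*y) - 4*s*y.
Proof. unfold Sg. pose proof s_sq. nra. Qed.
Lemma SgW' x y : Sg (-s) s x y = 1 + (x*x+y*y) + 4*s*x.
Proof. unfold Sg. pose proof s_sq. nra. Qed.
Lemma SgS' x y : Sg (-s) (-s) x y = 1 + (x*x+y*y) + 4*s*y.
Proof. unfold Sg. pose proof s_sq. nra. Qed.

Lemma hm_pos x y : in_disc x y -> 0 < hE x y /\ 0 < hN x y /\ 0 < hW x y /\ 0 < hS x y.
Proof. intros H. rewrite hE_eq, hN_eq, hW_eq, hS_eq by auto.
  repeat split; apply Hg_bounds. Qed.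

Lemma uniform_small eps : 0 < eps -> exists d0, 0 < d0 /\ forall x y, in_disc x y ->
  1 - (x*x+y*y) < d0 -> (hE x y < eps \/ hW x y < eps) /\ (hN x y < eps \/ hS x y < eps).
Proof.
  intros He. destruct (Hg_small_gen eps 1 He ltac:(lra)) as [d0 [Hd P]].
  exists d0. split; auto. intros x y Hx Hr. pose proof s_pos.
  pose proof (sqn x). pose proof (sqn y).
  rewrite hE_eq, hN_eq, hW_eq, hS_eq by auto. split.
  - destruct (Rle_dec 0 x).
    + right. apply P; auto; try crn. rewrite SgW'. nra.
    + left. apply P; auto; try crn. rewrite SgE'. nra.
  - destruct (Rle_dec 0 y).
    + right. apply P; auto; try crn. rewrite SgS'. nra.
    + left. apply P; auto; try crn. rewrite SgN'. nra.
Qed.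

Lemma zero_small a : (forall eta, 0 < eta -> Rabs a < eta) -> a = 0.
Proof. intros H. destruct (Req_dec a 0); auto. exfalso.
  assert (0 < Rabs a) by (apply Rabs_pos_lt; auto). specialize (H _ H1). lra. Qed.

Lemma abs_cases a : Rabs a = a /\ 0 <= a \/ Rabs a = - a /\ a < 0.
Proof. unfold Rabs. destruct (Rcase_abs a); [right|left]; split; lra. Qed.

Lemma blp_eqs X Y Z : boundary_limit_point (X, Y, Z) ->
  Rabs X + Rabs Y = 1 /\ Z = s * (Rabs X - Rabs Y).
Proof.
  intros B.
  assert (K : forall eta, 0 < eta -> Rabs (Rabs X + Rabs Y - 1) < eta /\
                   Rabs (Z - s * (Rabs X - Rabs Y)) < eta).
  { intros eta He. set (e := eta / 8).
    destruct (uniform_small e ltac:(unfold e; lra)) as [d0 [Hd0 U]].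
    destruct (B e d0 ltac:(unfold e; lra) Hd0) as [x [y [Hx [Hr Hc]]]].
    destruct (U x y Hx ltac:(lra)) as [U1 U2].
    destruct (hm_pos x y Hx) as [p0 [p1 [p2 p3]]].
    pose proof (Hsum x y Hx) as Hs.
    unfold close3, Fmap, zre, zim, theta in Hc. fold s in Hc.
    destruct Hc as [c1 [c2 c3]].
    pose proof s_pos. pose proof s_lt1.
    apply Rabs_def2 in c1. apply Rabs_def2 in c2. apply Rabs_def2 in c3.
    set (D := hE x y - hN x y + hW x y - hS x y) in *.
    assert (L : Rabs (Rabs X + Rabs Y - 1) < eta /\ Rabs (Rabs X - Rabs Y - D) < 6 * e).
    { unfold D, e in *.
      destruct (abs_cases X) as [[AX SX]|[AX SX]]; rewrite AX;
      destruct (abs_cases Y) as [[AY SY]|[AY SY]]; rewrite AY;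
      destruct U1; destruct U2; split; apply Rabs_def1; lra. }
    destruct L as [L1 L2]. split; auto.
    replace (Z - s * (Rabs X - Rabs Y)) with ((Z - s * D) + (- s) * (Rabs X - Rabs Y - D)) by ring.
    eapply Rle_lt_trans; [apply Rabs_triang|]. rewrite Rabs_mult.
    rewrite Rabs_Ropp, (Rabs_pos_eq s) by lra.
    assert (Rabs (Z - s * D) < e) by (apply Rabs_def1; lra).
    assert (s * Rabs (Rabs X - Rabs Y - D) <= Rabs (Rabs X - Rabs Y - D)).
    { pose proof (Rabs_pos (Rabs X - Rabs Y - D)). nra. }
    unfold e in *. lra. }
  split.
  - apply Rminus_diag_uniq. apply zero_small. intros eta He. apply (K eta He).
  - apply Rminus_diag_uniq. apply zero_small. intros eta He. apply (K eta He).
Qed.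

Lemma quad_of_eqs X Y Z : Rabs X + Rabs Y = 1 -> Z = s * (Rabs X - Rabs Y) -> in_quad (X, Y, Z).
Proof.
  intros H1 H2. unfold in_quad, on_segment, vE, vN, vW, vS. fold s.
  destruct (abs_cases X) as [[AX SX]|[AX SX]]; rewrite AX in *;
  destruct (abs_cases Y) as [[AY SY]|[AY SY]]; rewrite AY in *.
  - left. exists Y. split; [lra|]. subst Z. f_equal; [f_equal|]; nra.
  - right; right; right. exists X. split; [lra|]. subst Z. f_equal; [f_equal|]; nra.
  - right; left. exists (-X). split; [lra|]. subst Z. f_equal; [f_equal|]; nra.
  - right; right; left. exists (-Y). split; [lra|]. subst Z. f_equal; [f_equal|]; nra.
Qed.

Lemma blp_quad w : boundary_limit_point w -> in_quad w.
Proof. destruct w as [[X Y] Z]. intros B. destruct (blp_eqs X Y Z B). apply quad_of_eqs; auto. Qed.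

Definition gpath r th := Hg s (-s) (r * cos th) (r * sin th).

Lemma gpath_cont r t : 0 <= r -> r * r < 1 -> continuity (fun th => gpath r th - t).
Proof.
  intros H0 H1 th. apply continuity_pt_filterlim. apply (ex_derive_continuous (fun th => gpath r th - t)).
  unfold gpath, Hg, Sg, dg. auto_derive.
  pose proof (circ th). pose proof s_sq.
  match goal with |- ?e <> 0 => assert (E : e = 1 - r*r) by nra end.
  rewrite E. lra.
Qed.

Lemma corner_path eps d0 t : 0 < eps -> 0 < d0 -> 0 <= t <= 1 ->
  exists r th, 0 < r /\ r * r < 1 /\ 1 - d0 < r * r /\ 0 <= cos th /\ 0 <= sin th /\
   Rabs (gpath r th - t) < eps.
Proof.
  intros He Hd Ht.
  destruct (Hg_small_gen eps 1 He ltac:(lra)) as [ds [Hds Ps]].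
  destruct (Hg_large_gen eps (/2) He ltac:(lra)) as [dl [Hdl Pl]].
  destruct (min4_pos d0 ds dl (19/100) Hd Hds Hdl ltac:(lra)) as [D [HD [D1 [D2 [D3 D4]]]]].
  set (r := sqrt (1 - D/2)).
  assert (Hr2 : r * r = 1 - D/2) by (apply sqrt_sqrt; lra).
  assert (Hr0 : 0 < r) by (apply sqrt_lt_R0; lra).
  assert (Hr9 : 9/10 <= r) by nra.
  pose proof s_pos. pose proof s_sq. pose proof PI_RGT_0.
  assert (s7 : 7/10 < s) by nra.
  assert (G0 : 1 - eps < gpath r 0).
  { unfold gpath. rewrite cos_0, sin_0. apply Pl; try crn.
    - unfold in_disc. nra.
    - nra.
    - rewrite SgE'. nra. }
  assert (G1 : gpath r (PI/2) < eps).
  { unfold gpath. rewrite cos_PI2, sin_PI2. apply Ps; try crn.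
    - unfold in_disc. nra.
    - nra.
    - rewrite SgE'. nra. }
  exists r.
  destruct (Rle_dec (gpath r 0) t) as [C1|C1].
  { exists 0. rewrite cos_0, sin_0. repeat split; try lra.
    apply Rabs_def1; lra. }
  destruct (Rle_dec t (gpath r (PI/2))) as [C2|C2].
  { exists (PI/2). rewrite cos_PI2, sin_PI2. repeat split; try lra.
    apply Rabs_def1; lra. }
  destruct (IVT_cor (fun th => gpath r th - t) 0 (PI/2) (gpath_cont r t ltac:(lra) ltac:(lra))
     ltac:(lra) ltac:(nra)) as [th [Hth Eth]].
  exists th. repeat split; try lra.
  - apply cos_ge_0; lra.
  - apply sin_ge_0; lra.
  - rewrite Eth, Rabs_R0. lra.
Qed.

Lemma Hg_eq_of a b x y a' b' x' y' : Sg a b x y = Sg a' b' x' y' -> dg a b x y = dg a' b' x' y' ->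
  Hg a b x y = Hg a' b' x' y'.
Proof. intros E1 E2. unfold Hg. rewrite E1, E2. reflexivity. Qed.

Lemma dg_s a b x y : (a = s \/ a = -s) -> (b = s \/ b = -s) -> dg a b x y = 1 - (x*x+y*y).
Proof. intros Ha Hb. unfold dg. rewrite (un_s a b Ha Hb). ring. Qed.

Lemma seg_gen t eps delta (k : nat) : 0 <= t <= 1 -> 0 < eps -> 0 < delta ->
  exists x y hb ho hs1 hs2, in_disc x y /\ 1 - delta < x * x + y * y /\
   Rabs (hb - (1 - t)) < eps/8 /\ 0 < hs1 < eps/8 /\ 0 < hs2 < eps/8 /\ 0 < ho /\
   hb + ho + hs1 + hs2 = 1 /\
   ((k = 0%nat /\ hE x y = hb /\ hN x y = ho /\ hW x y = hs1 /\ hS x y = hs2) \/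
    (k = 1%nat /\ hN x y = hb /\ hW x y = ho /\ hS x y = hs1 /\ hE x y = hs2) \/
    (k = 2%nat /\ hW x y = hb /\ hS x y = ho /\ hE x y = hs1 /\ hN x y = hs2) \/
    (k <> 0%nat /\ k <> 1%nat /\ k <> 2%nat /\ hS x y = hb /\ hE x y = ho /\ hN x y = hs1 /\ hW x y = hs2)).
Proof.
  intros Ht He Hd.
  set (e := eps/8).
  destruct (Hg_small_gen e 1 ltac:(unfold e; lra) ltac:(lra)) as [ds [Hds Ps]].
  destruct (corner_path e (Rmin delta ds) (1 - t) ltac:(unfold e; lra)
     ltac:(apply Rmin_glb_lt; lra) ltac:(lra)) as [r [th [Hr0 [Hr1 [Hr2 [Hc [Hs Hg]]]]]]].
  assert (Hm1 := Rmin_l delta ds). assert (Hm2 := Rmin_r delta ds).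
  pose proof (circ th) as U. pose proof s_pos.
  assert (R2 : forall x y, (x = r * cos th \/ x = - (r * cos th) \/ x = r * sin th \/ x = - (r * sin th)) ->
     (y = r * cos th \/ y = - (r * cos th) \/ y = r * sin th \/ y = - (r * sin th)) ->
     x * x + y * y = r * r * (cos th * cos th + sin th * sin th) ->
     in_disc x y /\ 1 - delta < x*x + y*y /\ 1 - (x*x+y*y) < ds).
  { intros x y _ _ E. unfold in_disc. rewrite E, U. split; [lra|split; lra]. }
  assert (Cr : 0 <= r * cos th) by nra. assert (Sr : 0 <= r * sin th) by nra.
  destruct (Nat.eq_dec k 0) as [K0|K0]; [|destruct (Nat.eq_dec k 1) as [K1|K1];
     [|destruct (Nat.eq_dec k 2) as [K2|K2]]].
  - set (x := r * cos th). set (y := r * sin th).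
    assert (X0 : 0 <= x) by exact Cr. assert (Y0 : 0 <= y) by exact Sr.
    destruct (R2 x y ltac:(tauto) ltac:(tauto) ltac:(unfold x, y; ring)) as [Hin [Hb Hb']].
    exists x, y, (hE x y), (hN x y), (hW x y), (hS x y).
    destruct (hm_pos x y Hin) as [p0 [p1 [p2 p3]]]. pose proof (Hsum x y Hin).
    split; [auto|]. split; [auto|].
    split; [rewrite hE_eq by auto; exact Hg|].
    split; [split; [auto|rewrite hW_eq by auto; apply Ps; auto; try crn; rewrite SgW'; nra]|].
    split; [split; [auto|rewrite hS_eq by auto; apply Ps; auto; try crn; rewrite SgS'; nra]|].
    split; [auto|]. split; [lra|].
    left. repeat split; auto.
  - set (x := - (r * sin th)). set (y := r * cos th).
    assert (X0 : x <= 0) by (unfold x; lra). assert (Y0 : 0 <= y) by exact Cr.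
    destruct (R2 x y ltac:(tauto) ltac:(tauto) ltac:(unfold x, y; ring)) as [Hin [Hb Hb']].
    exists x, y, (hN x y), (hW x y), (hS x y), (hE x y).
    destruct (hm_pos x y Hin) as [p0 [p1 [p2 p3]]]. pose proof (Hsum x y Hin).
    split; [auto|]. split; [auto|].
    split; [|].
    { rewrite hN_eq by auto. unfold gpath in Hg.
      rewrite (Hg_eq_of s s x y s (-s) (r * cos th) (r * sin th)). exact Hg.
      rewrite SgN', SgE'. unfold x, y. ring.
      rewrite !dg_s by crn. unfold x, y. ring. }
    split; [split; [auto|rewrite hS_eq by auto; apply Ps; auto; try crn; rewrite SgS'; nra]|].
    split; [split; [auto|rewrite hE_eq by auto; apply Ps; auto; try crn; rewrite SgE'; nra]|].
    split; [auto|]. split; [lra|].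
    right; left. repeat split; auto.
  - set (x := - (r * cos th)). set (y := - (r * sin th)).
    assert (X0 : x <= 0) by (unfold x; lra). assert (Y0 : y <= 0) by (unfold y; lra).
    destruct (R2 x y ltac:(tauto) ltac:(tauto) ltac:(unfold x, y; ring)) as [Hin [Hb Hb']].
    exists x, y, (hW x y), (hS x y), (hE x y), (hN x y).
    destruct (hm_pos x y Hin) as [p0 [p1 [p2 p3]]]. pose proof (Hsum x y Hin).
    split; [auto|]. split; [auto|].
    split; [|].
    { rewrite hW_eq by auto. unfold gpath in Hg.
      rewrite (Hg_eq_of (-s) s x y s (-s) (r * cos th) (r * sin th)). exact Hg.
      rewrite SgW', SgE'. unfold x, y. ring.
      rewrite !dg_s by crn. unfold x, y. ring. }
    split; [split; [auto|rewrite hE_eq by auto; apply Ps; auto; try crn; rewrite SgE'; nra]|].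
    split; [split; [auto|rewrite hN_eq by auto; apply Ps; auto; try crn; rewrite SgN'; nra]|].
    split; [auto|]. split; [lra|].
    right; right; left. repeat split; auto.
  - set (x := r * sin th). set (y := - (r * cos th)).
    assert (X0 : 0 <= x) by exact Sr. assert (Y0 : y <= 0) by (unfold y; lra).
    destruct (R2 x y ltac:(tauto) ltac:(tauto) ltac:(unfold x, y; ring)) as [Hin [Hb Hb']].
    exists x, y, (hS x y), (hE x y), (hN x y), (hW x y).
    destruct (hm_pos x y Hin) as [p0 [p1 [p2 p3]]]. pose proof (Hsum x y Hin).
    split; [auto|]. split; [auto|].
    split; [|].
    { rewrite hS_eq by auto. unfold gpath in Hg.
      rewrite (Hg_eq_of (-s) (-s) x y s (-s) (r * cos th) (r * sin th)). exact Hg.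
      rewrite SgS', SgE'. unfold x, y. ring.
      rewrite !dg_s by crn. unfold x, y. ring. }
    split; [split; [auto|rewrite hN_eq by auto; apply Ps; auto; try crn; rewrite SgN'; nra]|].
    split; [split; [auto|rewrite hW_eq by auto; apply Ps; auto; try crn; rewrite SgW'; nra]|].
    split; [auto|]. split; [lra|].
    right; right; right. repeat split; auto.
Qed.

Lemma zlem A C eps : Rabs (A - C) < eps -> Rabs (s * (A - C)) < eps.
Proof. intros H. rewrite Rabs_mult, Rabs_pos_eq by (left; apply s_pos).
  pose proof s_lt1. pose proof s_pos. pose proof (Rabs_pos (A - C)). nra. Qed.

Lemma quad_blp w : in_quad w -> boundary_limit_point w.
Proof.
  intros Q eps delta He Hd.
  destruct Q as [Q|[Q|[Q|Q]]]; destruct Q as [t [Ht Hw]]; unfold vE, vN, vW, vS in Hw;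
    simpl in Hw; subst w; fold s.
  - destruct (seg_gen t eps delta 0 Ht He Hd) as [x [y [hb [ho [hs1 [hs2 [Hin [Hr [Hb [Hs1 [Hs2 [Ho [Hs Hk]]]]]]]]]]]]].
    destruct Hk as [[_ [E0 [E1 [E2 E3]]]]|[[K _]|[[K _]|[K0 [K1 [K2 _]]]]]]; try discriminate; try (exfalso; first [ (apply K0; reflexivity) | (apply K1; reflexivity) | (apply K2; reflexivity)]).
    exists x, y. split; auto. split; auto. unfold close3, Fmap, zre, zim, theta. fold s.
    rewrite E0, E1, E2, E3. apply Rabs_def2 in Hb.
    split; [apply Rabs_def1; lra|]. split; [apply Rabs_def1; lra|].
    match goal with |- Rabs (s * ?A - ?B) < _ => replace (s*A - B) with (s * (A - (1 - 2*t))) by ring end.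
    apply zlem. apply Rabs_def1; lra.
  - destruct (seg_gen t eps delta 1 Ht He Hd) as [x [y [hb [ho [hs1 [hs2 [Hin [Hr [Hb [Hs1 [Hs2 [Ho [Hs Hk]]]]]]]]]]]]].
    destruct Hk as [[K _]|[[_ [E0 [E1 [E2 E3]]]]|[[K _]|[K0 [K1 [K2 _]]]]]]; try discriminate; try (exfalso; first [ (apply K0; reflexivity) | (apply K1; reflexivity) | (apply K2; reflexivity)]).
    exists x, y. split; auto. split; auto. unfold close3, Fmap, zre, zim, theta. fold s.
    rewrite E0, E1, E2, E3. apply Rabs_def2 in Hb.
    split; [apply Rabs_def1; lra|]. split; [apply Rabs_def1; lra|].
    match goal with |- Rabs (s * ?A - ?B) < _ => replace (s*A - B) with (s * (A - (2*t - 1))) by ring end.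
    apply zlem. apply Rabs_def1; lra.
  - destruct (seg_gen t eps delta 2 Ht He Hd) as [x [y [hb [ho [hs1 [hs2 [Hin [Hr [Hb [Hs1 [Hs2 [Ho [Hs Hk]]]]]]]]]]]]].
    destruct Hk as [[K _]|[[K _]|[[_ [E0 [E1 [E2 E3]]]]|[K0 [K1 [K2 _]]]]]]; try discriminate; try (exfalso; first [ (apply K0; reflexivity) | (apply K1; reflexivity) | (apply K2; reflexivity)]).
    exists x, y. split; auto. split; auto. unfold close3, Fmap, zre, zim, theta. fold s.
    rewrite E0, E1, E2, E3. apply Rabs_def2 in Hb.
    split; [apply Rabs_def1; lra|]. split; [apply Rabs_def1; lra|].
    match goal with |- Rabs (s * ?A - ?B) < _ => replace (s*A - B) with (s * (A - (1 - 2*t))) by ring end.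
    apply zlem. apply Rabs_def1; lra.
  - destruct (seg_gen t eps delta 3 Ht He Hd) as [x [y [hb [ho [hs1 [hs2 [Hin [Hr [Hb [Hs1 [Hs2 [Ho [Hs Hk]]]]]]]]]]]]].
    destruct Hk as [[K _]|[[K _]|[[K _]|[_ [_ [_ [E0 [E1 [E2 E3]]]]]]]]]; try discriminate.
    exists x, y. split; auto. split; auto. unfold close3, Fmap, zre, zim, theta. fold s.
    rewrite E0, E1, E2, E3. apply Rabs_def2 in Hb.
    split; [apply Rabs_def1; lra|]. split; [apply Rabs_def1; lra|].
    match goal with |- Rabs (s * ?A - ?B) < _ => replace (s*A - B) with (s * (A - (2*t - 1))) by ring end.
    apply zlem. apply Rabs_def1; lra.
Qed.

From Stdlib Require Import FunctionalExtensionality.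

Lemma Ez : zre = Fh 1 0 (-1) 0.
Proof. apply functional_extensionality; intro x; apply functional_extensionality; intro y.
  unfold zre, Fh. ring. Qed.
Lemma Ezi : zim = Fh 0 1 0 (-1).
Proof. apply functional_extensionality; intro x; apply functional_extensionality; intro y.
  unfold zim, Fh. ring. Qed.
Lemma Eth : theta = Fh s (-s) s (-s).
Proof. apply functional_extensionality; intro x; apply functional_extensionality; intro y.
  unfold theta, Fh. fold s. ring. Qed.

Lemma pdx_val l0 l1 l2 l3 x y l : in_disc x y -> pdx (Fh l0 l1 l2 l3) x y l -> l = Lc l0 l1 l2 l3 HX x y.
Proof. intros H P. apply (uniqueness_limite (fun t => Fh l0 l1 l2 l3 t y) x). exact P.
  apply is_derive_Reals, Fh_pdx, H. Qed.
Lemma pdy_val l0 l1 l2 l3 x y l : in_disc x y -> pdy (Fh l0 l1 l2 l3) x y l -> l = Lc l0 l1 l2 l3 HY x y.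
Proof. intros H P. apply (uniqueness_limite (fun t => Fh l0 l1 l2 l3 x t) y). exact P.
  apply is_derive_Reals, Fh_pdy, H. Qed.

Theorem mainTheorem8 :
  (* (i) z = zre + i zim and vartheta are harmonic on the disc *)
  (harmonic_on_disc zre /\ harmonic_on_disc zim /\ harmonic_on_disc theta) /\
  (* (ii) d z * d zbar = (d vartheta)^2 on the disc *)
  (forall x y, in_disc x y ->
     forall ux uy vx vy tx ty : R,
       pdx zre x y ux -> pdy zre x y uy ->
       pdx zim x y vx -> pdy zim x y vy ->
       pdx theta x y tx -> pdy theta x y ty ->
       Cmul (wirtinger (ux, vx) (uy, vy)) (wirtinger (ux, - vx) (uy, - vy))
       = Cmul (wirtinger (tx, 0) (ty, 0)) (wirtinger (tx, 0) (ty, 0))) /\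
  (* (iii) boundary values on the four open arcs *)
  (forall phi, - (PI / 4) < phi < PI / 4 -> tends_to_at (cos phi) (sin phi) vE) /\
  (forall phi, PI / 4 < phi < 3 * PI / 4 -> tends_to_at (cos phi) (sin phi) vN) /\
  (forall phi, 3 * PI / 4 < phi < 5 * PI / 4 -> tends_to_at (cos phi) (sin phi) vW) /\
  (forall phi, 5 * PI / 4 < phi < 7 * PI / 4 -> tends_to_at (cos phi) (sin phi) vS) /\
  (* the set of boundary limit points is the closed quadrilateral *)
  (forall w : P3, boundary_limit_point w <-> in_quad w).
Proof.
  split; [|split; [|split; [exact tendsE|split; [exact tendsN|split; [exact tendsW|split; [exact tendsS|]]]]]].
  - rewrite Ez, Ezi, Eth. split; [|split]; apply Fh_harmonic.
  - intros x y H ux uy vx vy tx ty Hux Huy Hvx Hvy Htx Hty.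
    rewrite Ez in Hux, Huy. rewrite Ezi in Hvx, Hvy. rewrite Eth in Htx, Hty.
    apply pdx_val in Hux; auto. apply pdy_val in Huy; auto.
    apply pdx_val in Hvx; auto. apply pdy_val in Hvy; auto.
    apply pdx_val in Htx; auto. apply pdy_val in Hty; auto.
    subst. rewrite (ident2 x y H).
    replace (Lc s (- s) s (- s) HX x y) with (s * Lc 1 (-1) 1 (-1) HX x y) by (unfold Lc; ring).
    replace (Lc s (- s) s (- s) HY x y) with (s * Lc 1 (-1) 1 (-1) HY x y) by (unfold Lc; ring).
    set (A := Lc 1 (-1) 1 (-1) HX x y). set (B := Lc 1 (-1) 1 (-1) HY x y).
    assert (E : Cmul (wirtinger (s*A,0) (s*B,0)) (wirtinger (s*A,0) (s*B,0)) =
       Cscal (s*s) (Cmul (wirtinger (A,0) (B,0)) (wirtinger (A,0) (B,0))))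
      by (unfold Cmul, wirtinger, Cscal, Csub, Ci; simpl; f_equal; ring).
    rewrite E, s_sq. reflexivity.
  - intros w. split; [apply blp_quad | apply quad_blp].
Qed.
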